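(* Let $n\ge2$, let $A$ be a Hermitian matrix of order $n$ and $\mathcal{O}\in\mathcal{C}_{sg}^{(n)}$. Suppose that $\mathcal{O}\stackrel{\mathsf{p}}{\sim}\mathcal{O}'\stackrel{\mathsf{w}}{\sim}\mathcal{O}''$ or $\mathcal{O}\stackrel{\mathsf{w}}{\sim}\mathcal{O}'\stackrel{\mathsf{p}}{\sim}\mathcal{O}''$ with $\mathcal{O}''\in\mathcal{C}_{sp}^{(n)}$, and that the weak equivalence relation is given by a chain in canonical form containing $d$ shift equivalences. Let $A'$ be obtained from $A$ by applying $d+1$ cycles of the cyclic complex Jacobi method defined by the strategy $I_{\mathcal{O}}$. If all rotation angles satisfy $\phi_k\in[-\pi/4,\pi/4]$, $k\ge0$, then there is a constant $\gamma_n$ depending only on $n$ such that $S^2(A')\le\gamma_nS^2(A)$, $0\le\gamma_n<1$.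
   Context: $\imath=\sqrt{-1}$. For $1\le i<j\le n$ and real $\phi,\alpha$, $R(i,j,\phi,\alpha)$ is the $n\times n$ matrix equal to $I_n$ except for entries $(i,i)=(j,j)=\cos\phi$, $(i,j)=-e^{\imath\alpha}\sin\phi$, $(j,i)=e^{-\imath\alpha}\sin\phi$. $S(X)=\|X-\mathrm{diag}(X)\|_F$. The complex Jacobi method on Hermitian $A$ is $A^{(0)}=A$, $A^{(k+1)}=U_k^*A^{(k)}U_k$, $U_k=R(i_k,j_k,\phi_k,\alpha_k)$, with angles chosen so that entry $(i_k,j_k)$ (hence $(j_k,i_k)$) of $A^{(k+1)}$ is zero. Let $\mathcal{P}_n=\{(r,s):1\le r<s\le n\}$, $N=n(n-1)/2$; an ordering is a sequence listing each element of $\mathcal{P}_n$ exactly once. For an ordering $(i_0,j_0),\dots,(i_{N-1},j_{N-1})$, the cyclic strategy $I_{\mathcal{O}}$ uses $(i_{k\bmod N},j_{k\bmod N})$ as $k$-th pivot pair; a cycle is $N$ consecutive steps. Relations on orderings: an admissible transposition swaps two adjacent pairs with disjoint index sets; $\mathcal{O}\sim\mathcal{O}'$ if one is obtained from the other by finitely many admissible transpositions; $\mathcal{O}\stackrel{\mathsf{s}}{\sim}\mathcal{O}'$ if $\mathcal{O}=[\mathcal{O}_1,\mathcal{O}_2]$, $\mathcal{O}'=[\mathcal{O}_2,\mathcal{O}_1]$ (concatenation); $\mathcal{O}\stackrel{\mathsf{w}}{\sim}\mathcal{O}'$ if there is a chain $\mathcal{O}=\mathcal{O}_0,\dots,\mathcal{O}_r=\mathcal{O}'$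 of orderings whose adjacent terms are $\sim$ or $\stackrel{\mathsf{s}}{\sim}$; the chain is in canonical form if these relations alternate between $\sim$ and $\stackrel{\mathsf{s}}{\sim}$. $\mathcal{O}\stackrel{\mathsf{p}}{\sim}\mathcal{O}'$ if for some permutation $\mathsf{q}$ of $\{1,\dots,n\}$, $\mathcal{O}'$ arises by replacing each pair $(i_k,j_k)$ by the pair with entries $\mathsf{q}(i_k),\mathsf{q}(j_k)$ in increasing order. $\mathcal{C}_c^{(n)}$: orderings $(1,2),(\tau_3(1),3),(\tau_3(2),3),\dots,(\tau_n(1),n),\dots,(\tau_n(n-1),n)$, $\tau_j$ a permutation of $\{1,\dots,j-1\}$; $\mathcal{C}_r^{(n)}$: orderings $(n-1,n),(n-2,\tau_{n-2}(n-1)),(n-2,\tau_{n-2}(n)),\dots,(1,\tau_1(2)),\dots,(1,\tau_1(n))$, $\tau_i$ a permutation of $\{i+1,\dots,n\}$; $\overleftarrow{\mathcal{C}}_c^{(n)},\overleftarrow{\mathcal{C}}_r^{(n)}$ the sets of orderings whose reversed sequences lie in $\mathcal{C}_c^{(n)}$, $\mathcal{C}_r^{(n)}$; $\mathcal{C}_{sp}^{(n)}=\mathcal{C}_c^{(n)}\cup\overleftarrow{\mathcal{C}}_c^{(n)}\cup\mathcal{C}_r^{(n)}\cup\overleftarrow{\mathcal{C}}_r^{(n)}$. $\mathcal{C}_{sg}^{(n)}$ is the set of orderings $\mathcal{O}$ with $\mathcal{O}\stackrel{\mathsf{p}}{\sim}\mathcal{O}'\stackrel{\mathsf{w}}{\sim}\mathcal{O}''$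 or $\mathcal{O}\stackrel{\mathsf{w}}{\sim}\mathcal{O}'\stackrel{\mathsf{p}}{\sim}\mathcal{O}''$ for some ordering $\mathcal{O}'$ and some $\mathcal{O}''\in\mathcal{C}_{sp}^{(n)}$, weak equivalence given in canonical form. *)

(* Defs.v *)
From HB Require Import structures.
From mathcomp Require Import all_boot all_order all_algebra all_fingroup.
From mathcomp Require Import complex.
From mathcomp Require Import reals trigo Rstruct.
From Stdlib Require Import Relations.Relation_Operators.
Set Implicit Arguments.
Unset Strict Implicit.
Unset Printing Implicit Defensive.
Import Order.TTheory GRing.Theory Num.Theory.
Local Open Scope ring_scope.

Notation R := Rdefinitions.R.
Notation Cx := (complex R).

Definition expi (a : R) : Cx := (cos a +i* sin a)%C.
Definition abs2 (z : Cx) : R := (complex.Re z) ^+ 2 + (complex.Im z) ^+ 2.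

Definition conjT n (U : 'M[Cx]_n) : 'M[Cx]_n := (map_mx (@conjc R) U)^T.

Definition is_hermitian n (A : 'M[Cx]_n) : Prop :=
  forall i j : 'I_n, A j i = conjc (A i j).

Definition frob n (X : 'M[Cx]_n) : R :=
  Num.sqrt (\sum_(i < n) \sum_(j < n) abs2 (X i j)).

Definition diagpart n (X : 'M[Cx]_n) : 'M[Cx]_n :=
  \matrix_(i < n, j < n) (if i == j then X i i else 0).

Definition Soff n (X : 'M[Cx]_n) : R := frob (X - diagpart X).

Definition rot n (i j : 'I_n) (phi alpha : R) : 'M[Cx]_n :=
  \matrix_(r < n, s < n)
    if ((r == i) && (s == i)) || ((r == j) && (s == j)) then ((cos phi)%:C)%C
    else if (r == i) && (s == j) then - (expi alpha * ((sin phi)%:C)%C)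
    else if (r == j) && (s == i) then expi (- alpha) * ((sin phi)%:C)%C
    else if r == s then 1 else 0.

Definition ppair n := ('I_n * 'I_n)%type.

Definition Pn n : seq (ppair n) :=
  flatten [seq map (fun s : 'I_n => ((r, s) : ppair n)) (filter (fun s : 'I_n => (r < s)%N) (enum 'I_n)) | r <- enum 'I_n].

Definition Npairs n : nat := (n * (n - 1)) %/ 2.

Definition ordering n (O : seq (ppair n)) : Prop := perm_eq O (Pn n).

Definition jacobi_process n (O : seq (ppair n)) (A : 'M[Cx]_n)
  (Ak : nat -> 'M[Cx]_n) (phi alpha : nat -> R) : Prop :=
  Ak 0%N = A /\
  forall (k : nat) (i j : 'I_n), onth O (k %% size O) = Some (i, j) ->
    Ak k.+1 = conjT (rot i j (phi k) (alpha k)) *m Ak k *m rot i j (phi k) (alpha k)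
    /\ Ak k.+1 i j = 0.

Definition disjoint_pairs n (p q : ppair n) : bool :=
  [&& p.1 != q.1, p.1 != q.2, p.2 != q.1 & p.2 != q.2].

Definition adm_transp n (O O' : seq (ppair n)) : Prop :=
  exists (s1 s2 : seq (ppair n)) (p q : ppair n),
    O = s1 ++ p :: q :: s2 /\ O' = s1 ++ q :: p :: s2 /\ disjoint_pairs p q.

Definition equiv_ord n (O O' : seq (ppair n)) : Prop :=
  clos_refl_trans (seq (ppair n)) (@adm_transp n) O O'.

Definition shift_equiv n (O O' : seq (ppair n)) : Prop :=
  exists O1 O2 : seq (ppair n), O = O1 ++ O2 /\ O' = O2 ++ O1.

Fixpoint wchain n (O : seq (ppair n)) (c : seq (bool * seq (ppair n))) : Prop :=
  match c with
  | [::] => True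
  | (b, O1) :: c' =>
      (if b then shift_equiv O O1 else equiv_ord O O1) /\ wchain O1 c'
  end.

(* O ~w O' via a chain in canonical form (labels alternate) containing
   exactly d shift equivalences *)
Definition wequiv_canon n (d : nat) (O O' : seq (ppair n)) : Prop :=
  exists c : seq (bool * seq (ppair n)),
    [/\ wchain O c, last O (map snd c) = O',
        sorted (fun a b : bool => a != b) (map fst c)
      & count fst c = d].

Definition perm_pair n (q : 'S_n) (p : ppair n) : ppair n :=
  if (q p.1 < q p.2)%N then (q p.1, q p.2) else (q p.2, q p.1).

Definition p_equiv n (O O' : seq (ppair n)) : Prop :=
  exists q : 'S_n, O' = map (perm_pair q) O.

(* column-wise: (tau_j(1),j),...,(tau_j(j-1),j) for j = 2..n *)
Definition col_cyclic n (O : seq (ppair n)) : Prop :=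
  exists blk : 'I_n -> seq (ppair n),
    (forall j : 'I_n, perm_eq (blk j) (map (fun i : 'I_n => ((i, j) : ppair n)) (filter (fun i : 'I_n => (i < j)%N) (enum 'I_n))))
    /\ O = flatten [seq blk j | j <- enum 'I_n].

(* row-wise: rows n-1 down to 1, row i : (i,tau_i(i+1)),...,(i,tau_i(n)) *)
Definition row_cyclic n (O : seq (ppair n)) : Prop :=
  exists blk : 'I_n -> seq (ppair n),
    (forall i : 'I_n, perm_eq (blk i) (map (fun j : 'I_n => ((i, j) : ppair n)) (filter (fun j : 'I_n => (i < j)%N) (enum 'I_n))))
    /\ O = flatten [seq blk i | i <- rev (enum 'I_n)].

Definition C_sp n (O : seq (ppair n)) : Prop :=
  col_cyclic O \/ col_cyclic (rev O) \/ row_cyclic O \/ row_cyclic (rev O).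

Definition C_sg n (O : seq (ppair n)) : Prop :=
  ordering O /\
  exists (O' O'' : seq (ppair n)) (d : nat),
    C_sp O'' /\
    ((p_equiv O O' /\ wequiv_canon d O' O'') \/
     (wequiv_canon d O O' /\ p_equiv O' O'')).

(* Main.v *)
Require Import Defs.
From mathcomp Require Import all_boot all_order all_algebra all_fingroup.
From mathcomp Require Import complex.
From mathcomp Require Import reals trigo Rstruct.
From mathcomp Require Import ring lra zify.
From Stdlib Require Import Relations.Relation_Operators.
Import Order.TTheory GRing.Theory Num.Theory.
Set Implicit Arguments.
Unset Strict Implicit.
Unset Printing Implicit Defensive.
Local Open Scope ring_scope.

Notation rc x := ((x : R)%:C)%C.

Lemma abs2E (z : Cx) : rc (abs2 z) = z * conjc z.
Proof. case: z => a b; rewrite /abs2 /=; apply/eqP; rewrite eq_complex /=; apply/andP; split; apply/eqP; ring. Qed.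

Lemma abs2_inj (x y : Cx) : x * conjc x = y * conjc y -> abs2 x = abs2 y.
Proof. by rewrite -!abs2E => -[]. Qed.

Lemma abs2_ge0 z : 0 <= abs2 z.
Proof. rewrite /abs2; apply: addr_ge0; exact: sqr_ge0. Qed.

Lemma abs2M (x y : Cx) : abs2 (x * y) = abs2 x * abs2 y.
Proof. case: x => a b; case: y => c d. rewrite /abs2 /=. ring. Qed.

Lemma abs2D (x y : Cx) : abs2 (x + y) <= 2 * abs2 x + 2 * abs2 y.
Proof. case: x => a b; case: y => c d. rewrite /abs2 /=.
have := sqr_ge0 (a - c); have := sqr_ge0 (b - d). nra. Qed.

Lemma abs2N (x : Cx) : abs2 (- x) = abs2 x.
Proof. case: x => a b; rewrite /abs2 /=; ring. Qed.

Lemma abs2_conj (x : Cx) : abs2 (conjc x) = abs2 x.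
Proof. case: x => a b; rewrite /abs2 /=; ring. Qed.

Lemma abs2_0 : abs2 0 = 0.
Proof. by rewrite /abs2 /= expr0n /= addr0. Qed.

Lemma abs2_rc x : abs2 (rc x) = x ^+ 2.
Proof. by rewrite /abs2 /= expr0n /= addr0. Qed.

Lemma cs1 (a : R) : cos a ^+ 2 + sin a ^+ 2 = 1.
Proof. exact: cos2Dsin2. Qed.

Lemma abs2_expi a : abs2 (expi a) = 1.
Proof. rewrite /abs2 /expi /=. exact: cs1. Qed.

Lemma conj_expi a : conjc (expi a) = expi (- a).
Proof. by rewrite /expi /= cosN sinN. Qed.

Lemma expiN_mul a : expi a * expi (- a) = 1.
Proof. rewrite /expi cosN sinN; apply/eqP; rewrite eq_complex /=; apply/andP; split; apply/eqP.
- have := cs1 a; lra.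
- ring. Qed.

Lemma conj_rc x : conjc (rc x) = rc x.
Proof. exact: conjc_real. Qed.


Ltac ceq := apply/eqP; rewrite eq_complex /=; apply/andP; split; apply/eqP.

Lemma rcD (x y : R) : rc (x + y) = rc x + rc y.
Proof. ceq; ring. Qed.
Lemma rcM (x y : R) : rc (x * y) = rc x * rc y.
Proof. ceq; ring. Qed.
Lemma conjD (x y : Cx) : conjc (x + y) = conjc x + conjc y.
Proof. case: x => ? ?; case: y => ? ?; ceq; ring. Qed.
Lemma conjM (x y : Cx) : conjc (x * y) = conjc x * conjc y.
Proof. case: x => ? ?; case: y => ? ?; ceq; ring. Qed.
Lemma conjN (x : Cx) : conjc (- x) = - conjc x.
Proof. case: x => ? ?; ceq; ring. Qed.

Lemma rc_inj (x y : R) : rc x = rc y -> x = y.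
Proof. by case. Qed.

Lemma N2x2 (a b e f : Cx) (c s : R) : c ^+ 2 + s ^+ 2 = 1 -> conjc e = f -> e * f = 1 ->
  abs2 (a * rc c + b * (f * rc s)) + abs2 (a * (- (e * rc s)) + b * rc c) = abs2 a + abs2 b.
Proof.
move=> hcs he hef.
have hf : conjc f = e by rewrite -he conjcK.
apply: rc_inj; rewrite !(rcD (abs2 _) (abs2 _)) !abs2E.
rewrite !(conjD, conjM, conjN) hf he !conj_rc.
have h1 : rc c * rc c + rc s * rc s = 1.
  by rewrite -!rcM -rcD -!expr2 hcs.
apply/eqP; rewrite -subr_eq0; apply/eqP.
transitivity ((rc c * rc c + rc s * rc s - 1) * (a * conjc a + b * conjc b)
   + rc s * rc s * (e * f - 1) * (a * conjc a + b * conjc b)); first ring.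
rewrite h1 hef !subrr; ring.
Qed.

Lemma conj01 (b : bool) : conjc (b%:R : Cx) = b%:R.
Proof. by case: b; ceq; rewrite ?oppr0. Qed.

Definition inb n (i j r : 'I_n) := (r == i) || (r == j).
Definition blockid n (i j : 'I_n) (Q : 'M[Cx]_n) :=
  forall r s, ~~ (inb i j r && inb i j s) -> Q r s = (r == s)%:R.

Section Entries.
Variables (n : nat) (i j : 'I_n).
Hypothesis ij : i != j.

Lemma sum2 (F : 'I_n -> Cx) : (forall k, ~~ inb i j k -> F k = 0) -> \sum_k F k = F i + F j.
Proof.
move=> H; rewrite (bigD1 i) //= (bigD1 j) /=; last by rewrite eq_sym.
rewrite big1 ?addr0 // => k /andP[ki kj]; apply: H; by rewrite /inb negb_or ki kj.
Qed.

Lemma sumP2 (P : pred 'I_n) (F : 'I_n -> R) : P i -> P j ->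
  \sum_(k | P k) F k = F i + F j + \sum_(k | P k && ~~ inb i j k) F k.
Proof.
move=> Pi Pj; rewrite (bigD1 i) //= (bigD1 j) /=; last by rewrite Pj eq_sym.
rewrite addrA; congr (_ + _); apply: eq_bigl => k; rewrite /inb negb_or.
by rewrite andbA [X in X && _]andbC.
Qed.

Lemma sum_delta (F : 'I_n -> Cx) s : \sum_k F k * (k == s)%:R = F s.
Proof.
rewrite (bigD1 s) //= eqxx mulr1 big1 ?addr0 // => k ks; by rewrite (negbTE ks) mulr0.
Qed.
Lemma sum_deltaL (F : 'I_n -> Cx) r : \sum_k (r == k)%:R * F k = F r.
Proof.
rewrite (bigD1 r) //= eqxx mul1r big1 ?addr0 // => k ks; by rewrite eq_sym (negbTE ks) mul0r.
Qed.

Lemma mulR_entry (Q X : 'M[Cx]_n) r s : blockid i j Q ->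
  (X *m Q) r s = if inb i j s then X r i * Q i s + X r j * Q j s else X r s.
Proof.
move=> bQ; rewrite mxE; case: ifP => hs.
- apply: sum2 => k hk; rewrite bQ; last by rewrite (negbTE hk).
  have -> : (k == s) = false by apply/negP => /eqP ks; move: hk; rewrite ks hs.
  by rewrite mulr0.
- rewrite -(sum_delta (fun k => X r k)); apply: eq_bigr => k _.
  by rewrite bQ // hs andbF.
Qed.

Lemma mulL_entry (Q X : 'M[Cx]_n) r s : blockid i j Q ->
  (Q *m X) r s = if inb i j r then Q r i * X i s + Q r j * X j s else X r s.
Proof.
move=> bQ; rewrite mxE; case: ifP => hr.
- apply: sum2 => k hk; rewrite bQ; last by rewrite (negbTE hk) andbF.
  have -> : (r == k) = false by apply/negP => /eqP ks; move: hk; rewrite -ks hr.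
  by rewrite mul0r.
- rewrite -(sum_deltaL (fun k => X k s)); apply: eq_bigr => k _.
  by rewrite bQ // hr.
Qed.

Variables (ph al : R).
Local Notation Rt := (Defs.rot i j ph al).

Lemma rot_blockid : blockid i j Rt.
Proof.
move=> r s; rewrite /inb mxE.
case: (r == i); case: (r == j); case: (s == i); case: (s == j) => //= _;
by case: (r == s).
Qed.

Lemma conjT_blockid Q : blockid i j Q -> blockid i j (conjT Q).
Proof.
move=> bQ r s H; rewrite /conjT !mxE bQ; last by rewrite andbC.
by rewrite conj01 eq_sym.
Qed.

Lemma rot_ii : Rt i i = rc (cos ph).
Proof. by rewrite mxE !eqxx. Qed.
Lemma rot_jj : Rt j j = rc (cos ph).
Proof. by rewrite mxE !eqxx orbT. Qed.
Lemma rot_ij : Rt i j = - (expi al * rc (sin ph)).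
Proof. by rewrite mxE !eqxx (negbTE ij) [j == i]eq_sym (negbTE ij). Qed.
Lemma rot_ji : Rt j i = expi (- al) * rc (sin ph).
Proof. by rewrite mxE !eqxx (negbTE ij) [j == i]eq_sym (negbTE ij). Qed.

End Entries.

Definition bF n (P : pred 'I_n) (X : 'M[Cx]_n) := \sum_(r | P r) \sum_(s | P s) abs2 (X r s).
Definition boff n (P : pred 'I_n) (X : 'M[Cx]_n) :=
  \sum_(r | P r) \sum_(s | P s && (s != r)) abs2 (X r s).
Definition bD n (P : pred 'I_n) (X : 'M[Cx]_n) := \sum_(r | P r) abs2 (X r r).
Definition pv n (p : ppair n) (X : 'M[Cx]_n) := abs2 (X p.1 p.2) + abs2 (X p.2 p.1).

Lemma bF_split n (P : pred 'I_n) X : bF P X = boff P X + bD P X.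
Proof.
rewrite /bF /boff /bD -big_split /=; apply: eq_bigr => r Pr.
by rewrite (bigD1 r) //= addrC.
Qed.

Lemma pv_ge0 n (p : ppair n) X : 0 <= pv p X.
Proof. by rewrite /pv addr_ge0 ?abs2_ge0. Qed.

Section Step.
Variables (n : nat) (i j : 'I_n).
Hypothesis ij : i != j.
Variables (ph al : R) (X : 'M[Cx]_n).
Local Notation Rt := (Defs.rot i j ph al).
Local Notation W := (conjT Rt *m X).
Local Notation Z := (conjT Rt *m X *m Rt).

Lemma conjT_entry (Q : 'M[Cx]_n) r s : conjT Q r s = conjc (Q s r).
Proof. by rewrite /conjT !mxE. Qed.

Lemma W_entry r s : W r s = if inb i j r then conjT Rt r i * X i s + conjT Rt r j * X j s else X r s.
Proof. apply: mulL_entry => //; apply: conjT_blockid; exact: rot_blockid. Qed.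

Lemma Z_entry r s : Z r s = if inb i j s then W r i * Rt i s + W r j * Rt j s else W r s.
Proof. apply: mulR_entry => //; exact: rot_blockid. Qed.

Lemma Z_out r s : ~~ inb i j r -> ~~ inb i j s -> Z r s = X r s.
Proof. by move=> hr hs; rewrite Z_entry (negbTE hs) W_entry (negbTE hr). Qed.

Lemma inb_i : inb i j i. Proof. by rewrite /inb eqxx. Qed.
Lemma inb_j : inb i j j. Proof. by rewrite /inb eqxx orbT. Qed.

Lemma Z_col_j r : ~~ inb i j r -> Z r j = X r i * Rt i j + X r j * Rt j j.
Proof. by move=> hr; rewrite Z_entry inb_j !W_entry (negbTE hr). Qed.

Lemma row_norm (P : pred 'I_n) r : P i -> P j ->
  \sum_(s | P s) abs2 (Z r s) = \sum_(s | P s) abs2 (W r s).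
Proof.
move=> Pi Pj; rewrite (sumP2 ij _ Pi Pj) [RHS](sumP2 ij _ Pi Pj).
congr (_ + _).
- rewrite !Z_entry inb_i inb_j rot_ii rot_jj // rot_ij // rot_ji //.
  apply: N2x2; [exact: cs1 | exact: conj_expi | exact: expiN_mul].
- apply: eq_bigr => s /andP[_ hs]; by rewrite Z_entry (negbTE hs).
Qed.

Lemma col_norm (P : pred 'I_n) s : P i -> P j ->
  \sum_(r | P r) abs2 (W r s) = \sum_(r | P r) abs2 (X r s).
Proof.
move=> Pi Pj; rewrite (sumP2 ij _ Pi Pj) [RHS](sumP2 ij _ Pi Pj).
congr (_ + _).
- rewrite !W_entry inb_i inb_j !conjT_entry rot_ii rot_jj // rot_ij // rot_ji //.
  rewrite !conj_rc conjN !conjM conj_rc !conj_expi opprK.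
  rewrite [rc _ * X i s]mulrC [_ * X j s]mulrC [_ * X i s]mulrC.
  rewrite (mulrC (rc (cos ph)) (X j s)).
  apply: N2x2; [exact: cs1 | by rewrite conj_expi opprK | ].
  by have := expiN_mul (- al); rewrite opprK.
- apply: eq_bigr => r /andP[_ hr]; by rewrite W_entry (negbTE hr).
Qed.

Lemma bF_step (P : pred 'I_n) : P i -> P j -> bF P Z = bF P X.
Proof.
move=> Pi Pj; rewrite /bF.
transitivity (\sum_(r | P r) \sum_(s | P s) abs2 (W r s)).
  by apply: eq_bigr => r _; exact: row_norm.
rewrite exchange_big [RHS]exchange_big /=; apply: eq_bigr => s _; exact: col_norm.
Qed.

Lemma bF_pair (Y : 'M[Cx]_n) : bF (inb i j) Y =
  abs2 (Y i i) + abs2 (Y j j) + (abs2 (Y i j) + abs2 (Y j i)).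
Proof.
have z : forall F : 'I_n -> R, \sum_(k | inb i j k && ~~ inb i j k) F k = 0.
  by move=> F; rewrite big_pred0 // => k; rewrite andbN.
rewrite /bF (sumP2 ij _ inb_i inb_j) z !(sumP2 ij _ inb_i inb_j) !z.
rewrite !addr0; ring.
Qed.

Lemma boff_step (P : pred 'I_n) : P i -> P j ->
  boff P Z = boff P X - pv (i, j) X + pv (i, j) Z.
Proof.
move=> Pi Pj.
have h1 := bF_step Pi Pj.
have h2 := bF_step inb_i inb_j.
rewrite !bF_pair in h2.
rewrite !bF_split /bD in h1.
rewrite (sumP2 ij _ Pi Pj) [X in _ = _ + X](sumP2 ij _ Pi Pj) in h1.
have h3 : \sum_(k | P k && ~~ inb i j k) abs2 (Z k k) = \sum_(k | P k && ~~ inb i j k) abs2 (X k k).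
  by apply: eq_bigr => k /andP[_ hk]; rewrite Z_out.
rewrite h3 in h1; rewrite /pv /=; lra.
Qed.

Lemma colv_step (P : pred 'I_n) s : P i -> P j -> ~~ inb i j s ->
  \sum_(r | P r) abs2 (Z r s) = \sum_(r | P r) abs2 (X r s).
Proof.
move=> Pi Pj hs; rewrite -(col_norm _ Pi Pj); apply: eq_bigr => r _.
by rewrite Z_entry (negbTE hs).
Qed.

End Step.

Definition soff2 n (X : 'M[Cx]_n) := boff xpredT X.

Lemma Soff2E n (X : 'M[Cx]_n) : Soff X ^+ 2 = soff2 X.
Proof.
rewrite /Soff /frob sqr_sqrtr; last by apply: sumr_ge0 => r _; apply: sumr_ge0 => s _; exact: abs2_ge0.
rewrite /soff2 /boff; apply: eq_bigr => r _.
rewrite (bigD1 r) //= !mxE eqxx subrr abs2_0 add0r.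
apply: eq_bigr => s sr; rewrite !mxE eq_sym (negbTE sr) subr0 //.
Qed.

Lemma soff2_ge0 n (X : 'M[Cx]_n) : 0 <= soff2 X.
Proof. by apply: sumr_ge0 => r _; apply: sumr_ge0 => s _; exact: abs2_ge0. Qed.

Lemma conj0 : conjc (0 : Cx) = 0.
Proof. ceq; lra. Qed.

Lemma conj_sum n (F : 'I_n -> Cx) : conjc (\sum_k F k) = \sum_k conjc (F k).
Proof. exact: (big_morph _ conjD conj0). Qed.

Lemma conjT_mul n (A B : 'M[Cx]_n) : conjT (A *m B) = conjT B *m conjT A.
Proof.
apply/matrixP => r s; rewrite conjT_entry !mxE conj_sum; apply: eq_bigr => k _.
by rewrite conjM !conjT_entry mulrC.
Qed.

Lemma conjTK n (A : 'M[Cx]_n) : conjT (conjT A) = A.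
Proof. by apply/matrixP => r s; rewrite !conjT_entry conjcK. Qed.

Lemma herm_conjT n (X : 'M[Cx]_n) : is_hermitian X -> conjT X = X.
Proof. by move=> h; apply/matrixP => r s; rewrite conjT_entry (h s r). Qed.

Lemma conjT_herm n (X : 'M[Cx]_n) : conjT X = X -> is_hermitian X.
Proof. by move=> h r s; rewrite -{1}h conjT_entry. Qed.

Lemma herm_step n (R0 X : 'M[Cx]_n) : is_hermitian X -> is_hermitian (conjT R0 *m X *m R0).
Proof.
move=> h; apply: conjT_herm.
by rewrite !conjT_mul conjTK (herm_conjT h) mulmxA.
Qed.

Lemma rcN (x : R) : rc (- x) = - rc x.
Proof. ceq; lra. Qed.

Section RotId.
Variables (n : nat) (i j : 'I_n).
Hypothesis ij : i != j.

Lemma block_eq (Q1 Q2 : 'M[Cx]_n) : blockid i j Q1 -> blockid i j Q2 ->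
  Q1 i i = Q2 i i -> Q1 i j = Q2 i j -> Q1 j i = Q2 j i -> Q1 j j = Q2 j j -> Q1 = Q2.
Proof.
move=> b1 b2 e1 e2 e3 e4; apply/matrixP => r s.
case h: (inb i j r && inb i j s); last by rewrite b1 ?b2 ?h.
case/andP: h; rewrite /inb => /orP[] /eqP -> /orP[] /eqP -> //.
Qed.

Lemma blockid_sym (Q : 'M[Cx]_n) : blockid j i Q -> blockid i j Q.
Proof. by move=> b r s h; apply: b; rewrite /inb ![(_ == j) || _]orbC. Qed.

Lemma rot_swap ph al : Defs.rot j i ph al = Defs.rot i j (- ph) (- al).
Proof.
have ji : j != i by rewrite eq_sym.
apply: block_eq.
- by apply: blockid_sym; exact: rot_blockid.
- exact: rot_blockid.
- by rewrite rot_jj // rot_ii cosN.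
- by rewrite rot_ji // rot_ij // sinN rcN mulrN opprK.
- by rewrite rot_ij // rot_ji // sinN rcN opprK mulrN.
- by rewrite rot_ii rot_jj // cosN.
Qed.

Lemma rot_conjT ph al : conjT (Defs.rot i j ph al) = Defs.rot i j (- ph) al.
Proof.
apply: block_eq.
- apply: conjT_blockid; exact: rot_blockid.
- exact: rot_blockid.
- by rewrite conjT_entry rot_ii rot_ii cosN conj_rc.
- by rewrite conjT_entry rot_ji // rot_ij // conjM conj_expi opprK conj_rc sinN rcN mulrN opprK.
- by rewrite conjT_entry rot_ij // rot_ji // conjN conjM conj_expi conj_rc sinN rcN mulrN.
- by rewrite conjT_entry rot_jj // rot_jj // cosN conj_rc.
Qed.

Lemma rot_unitary ph al : Defs.rot i j ph al *m conjT (Defs.rot i j ph al) = 1%:M.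
Proof.
have bQ : blockid i j (conjT (Defs.rot i j ph al)) by apply: conjT_blockid; exact: rot_blockid.
have hc : rc (cos ph) * rc (cos ph) + rc (sin ph) * rc (sin ph) = 1.
  by rewrite -!rcM -rcD -!expr2 cs1.
have he := expiN_mul al.
apply: block_eq => //.
- move=> r s h; rewrite (mulR_entry ij) //.
  case hs: (inb i j s).
  + have hr : ~~ inb i j r by move: h; rewrite hs andbT.
    have [hri hrj] : (r == i) = false /\ (r == j) = false.
      by move: hr; rewrite /inb negb_or => /andP[/negbTE -> /negbTE ->].
    rewrite (@rot_blockid n i j ph al r i); last by rewrite /inb hri hrj.
    rewrite (@rot_blockid n i j ph al r j); last by rewrite /inb hri hrj.
    rewrite hri hrj !mul0r addr0.
    have -> : (r == s) = false by apply/negP => /eqP rs; move: hr; rewrite rs hs.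
    by [].
  + by rewrite (@rot_blockid n i j ph al r s) // hs andbF.
- move=> r s h; rewrite !mxE; by case: (r == s).
- rewrite (mulR_entry ij) // ?inb_i ?inb_j !conjT_entry ?rot_ii ?(rot_ij ij) ?(rot_ji ij) ?rot_jj ?conjN ?conjM ?conj_rc ?conj_expi ?opprK !mxE eqxx /=.
  apply/eqP; rewrite -subr_eq0; apply/eqP.
  transitivity ((rc (cos ph) * rc (cos ph) + rc (sin ph) * rc (sin ph) - 1)
     + rc (sin ph) * rc (sin ph) * (expi al * expi (- al) - 1)); first ring.
  by rewrite hc he !subrr mulr0 addr0.
- rewrite (mulR_entry ij) // ?inb_i ?inb_j !conjT_entry ?rot_ii ?(rot_ij ij) ?(rot_ji ij) ?rot_jj ?conjN ?conjM ?conj_rc ?conj_expi ?opprK !mxE (negbTE ij) /=.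
  ring.
- rewrite (mulR_entry ij) // ?inb_i ?inb_j !conjT_entry ?rot_ii ?(rot_ij ij) ?(rot_ji ij) ?rot_jj ?conjN ?conjM ?conj_rc ?conj_expi ?opprK !mxE eq_sym (negbTE ij) /=.
  ring.
- rewrite (mulR_entry ij) // ?inb_i ?inb_j !conjT_entry ?rot_ii ?(rot_ij ij) ?(rot_ji ij) ?rot_jj ?conjN ?conjM ?conj_rc ?conj_expi ?opprK !mxE eqxx /=.
  apply/eqP; rewrite -subr_eq0; apply/eqP.
  transitivity ((rc (cos ph) * rc (cos ph) + rc (sin ph) * rc (sin ph) - 1)
     + rc (sin ph) * rc (sin ph) * (expi al * expi (- al) - 1)); first ring.
  by rewrite hc he !subrr mulr0 addr0.
Qed.

End RotId.



Section Perm.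
Variables (n : nat) (q : 'S_n).

Definition pm (X : 'M[Cx]_n) : 'M[Cx]_n := \matrix_(r, s) X ((q^-1)%g r) ((q^-1)%g s).

Lemma pm_mul A B : pm (A *m B) = pm A *m pm B.
Proof.
apply/matrixP => r s; rewrite !mxE (reindex_inj (@perm_inj _ (q^-1)%g)) /=.
by apply: eq_bigr => k _; rewrite !mxE.
Qed.

Lemma pm_conjT A : pm (conjT A) = conjT (pm A).
Proof. by apply/matrixP => r s; rewrite !(mxE, conjT_entry). Qed.

Lemma qinv_eq (r i : 'I_n) : ((q^-1)%g r == i) = (r == q i).
Proof. by apply/eqP/eqP => [<-|->]; rewrite ?permKV ?permK. Qed.

Lemma pm_rot i j ph al : pm (Defs.rot i j ph al) = Defs.rot (q i) (q j) ph al.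
Proof.
apply/matrixP => r s; rewrite !mxE !qinv_eq.
by rewrite permKV.
Qed.

Lemma pm_entry X (i j : 'I_n) : pm X (q i) (q j) = X i j.
Proof. by rewrite mxE !permK. Qed.

Lemma soff2_pm X : soff2 (pm X) = soff2 X.
Proof.
rewrite /soff2 /boff [LHS](reindex_inj (@perm_inj _ q)) /=; apply: eq_bigr => r _.
rewrite [LHS](reindex_inj (@perm_inj _ q)) /=.
rewrite (eq_bigl (fun s => s != r)); last by move=> s; rewrite (inj_eq (@perm_inj _ q)).
by apply: eq_bigr => s _; rewrite pm_entry.
Qed.

Lemma herm_pm X : is_hermitian X -> is_hermitian (pm X).
Proof. by move=> h r s; rewrite !mxE h. Qed.

End Perm.

Lemma disj_inb n (p q : ppair n) k : disjoint_pairs p q -> inb p.1 p.2 k -> ~~ inb q.1 q.2 k.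
Proof.
case/and4P => h1 h2 h3 h4; rewrite /inb => /orP[]/eqP-> ; rewrite negb_or.
- by rewrite h1 h2.
- by rewrite h3 h4.
Qed.

Lemma disj_sym n (p q : ppair n) : disjoint_pairs p q -> disjoint_pairs q p.
Proof. by case/and4P => h1 h2 h3 h4; apply/and4P; split; rewrite eq_sym. Qed.

Lemma subE n (Q : 'M[Cx]_n) r k : (Q - 1%:M) r k = Q r k - (r == k)%:R.
Proof. by rewrite !mxE. Qed.

Lemma rotE_mul n (p q : ppair n) ph1 al1 ph2 al2 : disjoint_pairs p q ->
  (Defs.rot p.1 p.2 ph1 al1 - 1%:M) *m (Defs.rot q.1 q.2 ph2 al2 - 1%:M) = 0.
Proof.
move=> d; apply/matrixP => r s; rewrite [LHS]mxE [RHS]mxE big1 // => k _.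
rewrite !subE.
case hk: (inb p.1 p.2 k).
- have hk' := disj_inb d hk.
  rewrite (@rot_blockid n q.1 q.2 ph2 al2 k s); last by rewrite (negbTE hk').
  by rewrite subrr mulr0.
- rewrite (@rot_blockid n p.1 p.2 ph1 al1 r k); last by rewrite hk andbF.
  by rewrite subrr mul0r.
Qed.

Lemma rot_comm n (p q : ppair n) ph1 al1 ph2 al2 : disjoint_pairs p q ->
  Defs.rot p.1 p.2 ph1 al1 *m Defs.rot q.1 q.2 ph2 al2 =
  Defs.rot q.1 q.2 ph2 al2 *m Defs.rot p.1 p.2 ph1 al1.
Proof.
move=> d; have e1 := rotE_mul ph1 al1 ph2 al2 d.
have e2 := rotE_mul ph2 al2 ph1 al1 (disj_sym d).
move: e1 e2; set R1 := Defs.rot p.1 p.2 ph1 al1; set R2 := Defs.rot q.1 q.2 ph2 al2.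
rewrite !mulmxBl !mulmxBr !mulmx1 !mul1mx => e1 e2.
have h1 : R1 *m R2 = (R2 - 1%:M) + R1.
  by apply/eqP; rewrite -subr_eq; apply/eqP; exact: subr0_eq e1.
have h2 : R2 *m R1 = (R1 - 1%:M) + R2.
  by apply/eqP; rewrite -subr_eq; apply/eqP; exact: subr0_eq e2.
by rewrite h1 h2 addrAC [in RHS]addrAC [R2 + R1]addrC.
Qed.

Definition stepM n (p : ppair n) ph al (X : 'M[Cx]_n) :=
  conjT (Defs.rot p.1 p.2 ph al) *m X *m Defs.rot p.1 p.2 ph al.

Fixpoint fchain n (ps : seq (ppair n)) (X Y : 'M[Cx]_n) : Prop :=
  match ps with
  | [::] => Y = X
  | p :: ps' => exists ph al, [/\ p.1 != p.2, 1/2 <= cos ph ^+ 2,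
      stepM p ph al X p.1 p.2 = 0, stepM p ph al X p.2 p.1 = 0 &
      fchain ps' (stepM p ph al X) Y]
  end.

Fixpoint rchain n (ps : seq (ppair n)) (X Y : 'M[Cx]_n) (L : R) : Prop :=
  match ps with
  | [::] => Y = X /\ L = 0
  | p :: ps' => exists ph al L', [/\ p.1 != p.2, 1/2 <= cos ph ^+ 2,
      rchain ps' (stepM p ph al X) Y L' &
      L = pv p X + pv p (stepM p ph al X) + L']
  end.

Lemma fchain_cat n (s1 s2 : seq (ppair n)) X Z :
  fchain (s1 ++ s2) X Z <-> exists Y, fchain s1 X Y /\ fchain s2 Y Z.
Proof.
elim: s1 X => [|p s1 IH] X /=.
  by split => [h|[Y [-> h]]] //; exists X.
split.
- case=> ph [al [h1 h2 h3 h4 /IH [Y [hY hZ]]]].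
  by exists Y; split => //; exists ph, al; split.
- case=> Y [[ph [al [h1 h2 h3 h4 h5]]] hZ]; exists ph, al; split => //.
  by apply/IH; exists Y.
Qed.

Lemma rchain_cat n (s1 s2 : seq (ppair n)) X Z L :
  rchain (s1 ++ s2) X Z L -> exists Y L1 L2, [/\ rchain s1 X Y L1, rchain s2 Y Z L2 & L = L1 + L2].
Proof.
elim: s1 X L => [|p s1 IH] X L /=.
  by move=> h; exists X, 0, L; rewrite add0r.
case=> ph [al [L' [h1 h2 /IH [Y [L1 [L2 [hY hZ ->]]]] ->]]].
exists Y, (pv p X + pv p (stepM p ph al X) + L1), L2; split => //.
  by exists ph, al, L1.
by rewrite !addrA.
Qed.

Lemma rchain_ge0 n (ps : seq (ppair n)) X Y L : rchain ps X Y L -> 0 <= L.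
Proof.
elim: ps X L => [|p ps IH] X L /=; first by case=> _ ->.
case=> ph [al [L' [_ _ /IH h ->]]].
by apply: addr_ge0 => //; apply: addr_ge0; exact: pv_ge0.
Qed.

Lemma fchain_herm n (ps : seq (ppair n)) X Y : fchain ps X Y -> is_hermitian X -> is_hermitian Y.
Proof.
elim: ps X => [|p ps IH] X /=; first by move=> ->.
case=> ph [al [_ _ _ _ h]] hX; apply: (IH _ h); exact: herm_step.
Qed.

Lemma boff_stepM n (P : pred 'I_n) (p : ppair n) ph al X : p.1 != p.2 -> P p.1 -> P p.2 ->
  boff P (stepM p ph al X) = boff P X - pv p X + pv p (stepM p ph al X).
Proof. by case: p => i j /= ij Pi Pj; rewrite /stepM boff_step. Qed.

Lemma f2r n (ps : seq (ppair n)) X Y : fchain ps X Y ->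
  exists L, rchain ps X Y L /\ soff2 Y = soff2 X - L.
Proof.
elim: ps X => [|p ps IH] X /=.
  by move=> ->; exists 0; split => //; rewrite subr0.
case=> ph [al [h1 h2 h3 h4 /IH [L [hL hY]]]].
exists (pv p X + L); split.
  exists ph, al, L; split => //.
  by rewrite /pv h3 h4 abs2_0 !addr0.
rewrite hY /soff2 (boff_stepM _ _ _ h1) // /pv h3 h4 abs2_0; lra.
Qed.

Lemma fchain_soff n (ps : seq (ppair n)) X Y : fchain ps X Y -> soff2 Y <= soff2 X.
Proof.
move/f2r => [L [hL ->]]; have := rchain_ge0 hL; lra.
Qed.

Lemma rot_inv n (i j : 'I_n) ph al (Y : 'M[Cx]_n) : i != j ->
  conjT (Defs.rot i j (- ph) al) *m (conjT (Defs.rot i j ph al) *m Y *m Defs.rot i j ph al) *m Defs.rot i j (- ph) al = Y.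
Proof.
move=> ij; rewrite -(rot_conjT ij) conjTK.
rewrite !mulmxA (rot_unitary ij) mul1mx -mulmxA (rot_unitary ij) mulmx1 //.
Qed.

Lemma frev n (ps : seq (ppair n)) X Y : fchain (rev ps) X Y ->
  exists L, rchain ps Y X L /\ soff2 X = soff2 Y + L.
Proof.
elim: ps X Y => [|p ps IH] X Y /=.
  by move=> ->; exists 0; split => //; rewrite addr0.
rewrite rev_cons -cats1 => /fchain_cat [W [/IH [L [hL hX]] /=]].
case=> ph [al [h1 h2 h3 h4 ->]].
exists (pv p (stepM p ph al W) + pv p W + L); split.
  have e : stepM p (- ph) al (stepM p ph al W) = W.
    by rewrite /stepM rot_inv.
  exists (- ph), al, L; rewrite e; split => //; by rewrite cosN.
rewrite hX /soff2 (boff_stepM _ _ _ h1) // /pv h3 h4 abs2_0; lra.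
Qed.



Lemma stepM_out n (p : ppair n) ph al X r s : p.1 != p.2 ->
  ~~ inb p.1 p.2 r -> ~~ inb p.1 p.2 s -> stepM p ph al X r s = X r s.
Proof. by move=> h hr hs; rewrite /stepM Z_out. Qed.

Lemma conj2 n (A B X : 'M[Cx]_n) :
  conjT A *m (conjT B *m X *m B) *m A = conjT (B *m A) *m X *m (B *m A).
Proof. by rewrite conjT_mul !mulmxA. Qed.

Lemma stepM_comm n (p q : ppair n) ph1 al1 ph2 al2 X : disjoint_pairs p q ->
  stepM p ph1 al1 (stepM q ph2 al2 X) = stepM q ph2 al2 (stepM p ph1 al1 X).
Proof.
by move=> d; rewrite /stepM !conj2 (rot_comm _ _ _ _ d).
Qed.

Lemma inb1 n (p : ppair n) : inb p.1 p.2 p.1. Proof. by rewrite /inb eqxx. Qed.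
Lemma inb2 n (p : ppair n) : inb p.1 p.2 p.2. Proof. by rewrite /inb eqxx orbT. Qed.

Lemma fswap2 n (p q : ppair n) X Z : disjoint_pairs p q ->
  fchain [:: p; q] X Z -> fchain [:: q; p] X Z.
Proof.
move=> d [ph1 [al1 [hp hc1 z1 z1' [ph2 [al2 [hq hc2 z2 z2' /= ->]]]]]].
have dqp := disj_sym d.
have nq1 := disj_inb dqp (inb1 q); have nq2 := disj_inb dqp (inb2 q).
have np1 := disj_inb d (inb1 p); have np2 := disj_inb d (inb2 p).
rewrite -(stepM_comm _ _ _ _ _ d) in z2 z2' *.
exists ph2, al2; split => //.
- by rewrite -z2 stepM_out.
- by rewrite -z2' stepM_out.
exists ph1, al1; split => //.
- by rewrite stepM_comm // stepM_out.
- by rewrite stepM_comm // stepM_out.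
Qed.

Lemma fchain_transp n (O O' : seq (ppair n)) X Y : adm_transp O O' -> fchain O X Y -> fchain O' X Y.
Proof.
case=> s1 [s2 [p [q [-> [-> d]]]]] /fchain_cat [W [h1 h2]].
apply/fchain_cat; exists W; split => //.
change (fchain ([:: q; p] ++ s2) W Y); change (fchain ([:: p; q] ++ s2) W Y) in h2.
move/fchain_cat: h2 => [V [h3 h4]]; apply/fchain_cat; exists V; split => //.
exact: fswap2.
Qed.

Definition ncat n (O : seq (ppair n)) k := flatten (nseq k O).

Lemma fchain_ncat_transp n (O O' : seq (ppair n)) k X Y : adm_transp O O' ->
  fchain (ncat O k) X Y -> fchain (ncat O' k) X Y.
Proof.
move=> t; elim: k X => [|k IH] X //=.
move/fchain_cat => [W [h1 h2]]; apply/fchain_cat; exists W; split.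
- exact: fchain_transp h1.
- exact: IH.
Qed.

Lemma fchain_equiv n (O O' : seq (ppair n)) : equiv_ord O O' ->
  forall k X Y, fchain (ncat O k) X Y -> fchain (ncat O' k) X Y.
Proof.
elim => [x y t|x|x y z _ IH1 _ IH2] k X Y h //.
- exact: fchain_ncat_transp h.
- exact: IH2 (IH1 _ _ _ h).
Qed.

Lemma ncat_shift n (O1 O2 : seq (ppair n)) k :
  ncat (O1 ++ O2) k.+1 = O1 ++ ncat (O2 ++ O1) k ++ O2.
Proof.
elim: k => [|k IH]; first by rewrite /ncat /= !cats0.
have E : forall (O : seq (ppair n)) k, ncat O k.+1 = O ++ ncat O k by [].
by rewrite E IH E !catA.
Qed.

Lemma chain_red n (c : seq (bool * seq (ppair n))) : forall O m X Z,
  wchain O c -> (count fst c <= m)%N -> fchain (ncat O m.+1) X Z -> is_hermitian X ->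
  exists Y Y', [/\ fchain (ncat (last O (map snd c)) (m - count fst c).+1) Y Y',
    is_hermitian Y, soff2 Y <= soff2 X & soff2 Z <= soff2 Y'].
Proof.
elim: c => [|[b O1] c IH] O m X Z /=.
  move=> _ _ h hX; exists X, Z; split => //; by rewrite subn0.
case=> hb hc; case: b hb => /= hb hm.
- case: m hm => [|m] hm //.
  case: hb hc => s1 [s2 [-> ->]] hc.
  rewrite ncat_shift => /fchain_cat [X1 [h1 /fchain_cat [Z1 [h2 h3]]]] hX.
  have hX1 := fchain_herm h1 hX.
  have [|Y [Y' [f hY e1 e2]]] := IH _ m _ _ hc _ h2 hX1; first by lia.
  exists Y, Y'; split => //.
  + exact: le_trans e1 (fchain_soff h1).
  + exact: le_trans (fchain_soff h3) e2.
- move=> h hX; have h' := fchain_equiv hb h.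
  by apply: IH.
Qed.

Lemma pm_stepM n (q : 'S_n) (p : ppair n) ph al X : p.1 != p.2 ->
  exists ph' al', cos ph' ^+ 2 = cos ph ^+ 2 /\
    pm q (stepM p ph al X) = stepM (perm_pair q p) ph' al' (pm q X).
Proof.
move=> hp; rewrite /stepM !pm_mul pm_conjT pm_rot /perm_pair.
case: ifP => _ /=.
- by exists ph, al.
- exists (- ph), (- al); split; first by rewrite cosN.
  rewrite (rot_swap (i := q p.2) (j := q p.1)) //.
  by rewrite (inj_eq (@perm_inj _ q)) eq_sym.
Qed.

Lemma perm_pair_ne n (q : 'S_n) (p : ppair n) : p.1 != p.2 -> (perm_pair q p).1 != (perm_pair q p).2.
Proof.
move=> hp; rewrite /perm_pair; case: ifP => _ /=; rewrite (inj_eq (@perm_inj _ q)) //.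
by rewrite eq_sym.
Qed.

Lemma fchain_pm n (q : 'S_n) (ps : seq (ppair n)) X Y :
  fchain ps X Y -> fchain (map (perm_pair q) ps) (pm q X) (pm q Y).
Proof.
elim: ps X => [|p ps IH] X /=; first by move=> ->.
case=> ph [al [hp hc z1 z2 h]].
have [ph' [al' [ec e]]] := pm_stepM q ph al X hp.
exists ph', al'; rewrite -e; split => //.
- exact: perm_pair_ne.
- by rewrite ec.
- by rewrite /perm_pair; case: ifP => _ /=; rewrite pm_entry ?z1 ?z2.
- by rewrite /perm_pair; case: ifP => _ /=; rewrite pm_entry ?z1 ?z2.
- exact: IH.
Qed.

Lemma pm_ncat n (q : 'S_n) (O : seq (ppair n)) k :
  map (perm_pair q) (ncat O k) = ncat (map (perm_pair q) O) k.
Proof. by elim: k => [|k IH] //=; rewrite map_cat IH. Qed.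



Lemma sum_sub (I : finType) (P Q : pred I) (f : I -> R) :
  (forall i, P i -> Q i) -> (forall i, Q i -> 0 <= f i) ->
  \sum_(i | P i) f i <= \sum_(i | Q i) f i.
Proof.
move=> PQ f0; rewrite [X in _ <= X](bigID P) /=.
rewrite (eq_bigl P); last by move=> i; case: (boolP (P i)) => h; [rewrite andbT PQ | rewrite andbF].
rewrite lerDl; apply: sumr_ge0 => i /andP[hq _]; exact: f0.
Qed.

Lemma sum_one (I : finType) (Q : pred I) (f : I -> R) i0 :
  Q i0 -> (forall i, Q i -> 0 <= f i) -> f i0 <= \sum_(i | Q i) f i.
Proof.
move=> q0 f0; rewrite (bigD1 i0) //= lerDl; apply: sumr_ge0 => i /andP[h _]; exact: f0.
Qed.

Lemma boff_ge0 n (P : pred 'I_n) X : 0 <= boff P X.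
Proof. by apply: sumr_ge0 => r _; apply: sumr_ge0 => s _; exact: abs2_ge0. Qed.

Lemma boff_sub n (P Q : pred 'I_n) X : (forall i, P i -> Q i) -> boff P X <= boff Q X.
Proof.
move=> PQ; rewrite /boff.
apply: (@le_trans _ _ (\sum_(r | P r) \sum_(s | Q s && (s != r)) abs2 (X r s))).
  apply: ler_sum => r _; apply: sum_sub => [s /andP[h1 h2]|s _]; last exact: abs2_ge0.
  by rewrite PQ.
apply: sum_sub => // r _; apply: sumr_ge0 => s _; exact: abs2_ge0.
Qed.

Fixpoint Cst (k : nat) : R := if k is k'.+1 then 4 * Cst k' + 5 else 0.

Lemma Cst_ge0 k : 0 <= Cst k.
Proof. elim: k => [|k IH] /=; first by []. lra. Qed.

Lemma Cst_mono k l : (k <= l)%N -> Cst k <= Cst l.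
Proof.
elim: l => [|l IH]; first by rewrite leqn0 => /eqP ->.
rewrite leq_eqVlt ltnS => /orP[/eqP -> //|/IH h] /=.
have := Cst_ge0 l; lra.
Qed.

Lemma abs2_rc_le (x : Cx) (c : R) : abs2 (x * rc c) = abs2 x * c ^+ 2.
Proof. by rewrite abs2M abs2_rc. Qed.

Lemma sin2_le1 (a : R) : sin a ^+ 2 <= 1.
Proof. have := cs1 a; have := sqr_ge0 (cos a); lra. Qed.

Lemma entry_bound n (p0 c : 'I_n) (ph al : R) (X : 'M[Cx]_n) r : p0 != c -> 1/2 <= cos ph ^+ 2 ->
  ~~ inb p0 c r ->
  abs2 (X r c) <= 4 * abs2 (stepM (p0, c) ph al X r c) + 4 * abs2 (X r p0).
Proof.
move=> hp hc hr.
have e : stepM (p0, c) ph al X r c = X r p0 * - (expi al * rc (sin ph)) + X r c * rc (cos ph).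
  by rewrite /stepM /= (Z_col_j hp) // rot_ij // rot_jj.
have e2 : X r c * rc (cos ph) = stepM (p0, c) ph al X r c + X r p0 * (expi al * rc (sin ph)).
  by rewrite e; ring.
have h1 := abs2D (stepM (p0, c) ph al X r c) (X r p0 * (expi al * rc (sin ph))).
rewrite -e2 abs2_rc_le !abs2M abs2_expi abs2_rc mul1r in h1.
have h2 := sin2_le1 ph.
have h3 := abs2_ge0 (X r c); have h4 := abs2_ge0 (X r p0).
have h5 := abs2_ge0 (stepM (p0, c) ph al X r c).
have h6 : abs2 (X r c) * (1/2) <= abs2 (X r c) * cos ph ^+ 2 by apply: ler_wpM2l.
have h7 : abs2 (X r p0) * sin ph ^+ 2 <= abs2 (X r p0) by rewrite -{2}[abs2 (X r p0)]mulr1; apply: ler_wpM2l.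
lra.
Qed.

Lemma phase n (c : 'I_n) (P : pred 'I_n) (ps : seq (ppair n)) : forall X Y L,
  rchain ps X Y L -> (forall p, p \in ps -> p.2 = c /\ P p.1) -> ~~ P c ->
  uniq (map fst ps) ->
  \sum_(r | r \in map fst ps) abs2 (X r c) <=
    Cst (size ps) * (L + boff (fun r => r \in map fst ps) X).
Proof.
elim: ps => [|p ps IH] X Y L /=.
  move=> [_ ->] _ _ _; rewrite big_pred0 //; by rewrite mul0r.
case=> ph [al [L' [hp hc hr ->]]] hps hPc /andP[p0U uU].
have [pc Pp0] := hps p (mem_head _ _).
case: p pc Pp0 hp hr p0U hps => p0 c' /= -> Pp0 hp hr p0U hps.
set X' := stepM (p0, c) ph al X in hr *.
have hps' : forall p, p \in ps -> p.2 = c /\ P p.1 by move=> p hp'; apply: hps; rewrite in_cons hp' orbT.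
have IH' := IH _ _ _ hr hps' hPc uU.
set U' := map fst ps in IH' p0U *.
have inU' : forall r, r \in U' -> ~~ inb p0 c r.
  move=> r rU; rewrite /inb negb_or; apply/andP; split.
  - by apply/eqP => e; move: p0U; rewrite -e rU.
  - apply/eqP => e; case/mapP: rU => p hp' ep.
    have [_ Pp] := hps' p hp'; move: hPc; by rewrite -e ep Pp.
set B := boff (fun r => r \in p0 :: U') X.
have eqB : boff (fun r => r \in U') X' = boff (fun r => r \in U') X.
  apply: eq_bigr => r rU; apply: eq_bigr => s /andP[sU _].
  by rewrite /X' stepM_out // inU'.
have leB : boff (fun r => r \in U') X <= B.
  by apply: boff_sub => r rU; rewrite in_cons rU orbT.
have sp : \sum_(r | r \in U') abs2 (X r p0) <= B.
  rewrite /B /boff.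
  apply: (@le_trans _ _ (\sum_(r | r \in p0 :: U') \sum_(s | (s \in p0 :: U') && (s != r)) abs2 (X r s))); last by [].
  apply: (@le_trans _ _ (\sum_(r | r \in U') \sum_(s | (s \in p0 :: U') && (s != r)) abs2 (X r s))).
    apply: ler_sum => r rU; apply: (sum_one (i0 := p0)).
    - rewrite mem_head /=; apply/eqP => e; move: p0U; by rewrite e rU.
    - move=> s _; exact: abs2_ge0.
  apply: sum_sub => [r rU|r _]; first by rewrite in_cons rU orbT.
  apply: sumr_ge0 => s _; exact: abs2_ge0.
have split0 : \sum_(r | r \in p0 :: U') abs2 (X r c) = abs2 (X p0 c) + \sum_(r | r \in U') abs2 (X r c).
  rewrite (bigD1 p0) ?mem_head //=; congr (_ + _); apply: eq_bigl => r.
  rewrite in_cons; case: (boolP (r \in U')) => h; rewrite ?orbT ?orbF /=.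
  - by apply/eqP => e; move: p0U; rewrite -e h.
  - by case: (r =P p0).
have sb : \sum_(r | r \in U') abs2 (X r c) <=
    4 * \sum_(r | r \in U') abs2 (X' r c) + 4 * \sum_(r | r \in U') abs2 (X r p0).
  rewrite !mulr_sumr -big_split /=; apply: ler_sum => r rU.
  by apply: entry_bound => //; apply: inU'.
have pv0 : abs2 (X p0 c) <= pv (p0, c) X by rewrite /pv /= lerDl abs2_ge0.
rewrite eqB in IH'.
have := pv_ge0 (p0, c) X'; have := rchain_ge0 hr; have := Cst_ge0 (size ps).
have := boff_ge0 (fun r => r \in U') X.
rewrite split0 -/B.
move: IH' sb sp leB pv0.
set S1 := \sum_(r | r \in U') abs2 (X r c).
set S2 := \sum_(r | r \in U') abs2 (X' r c).
set S3 := \sum_(r | r \in U') abs2 (X r p0).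
set C := Cst (size ps).
set b := boff (fun r => r \in U') X.
move=> h1 h2 h3 h4 h5 h6 h7 h8 h9.
have hB : 0 <= B by apply: boff_ge0.
have hpX := pv_ge0 (p0, c) X.
have m1 : C * b <= C * B by apply: ler_wpM2l.
have m2 : 0 <= C * pv (p0, c) X by apply: mulr_ge0.
have m3 : 0 <= C * pv (p0, c) X' by apply: mulr_ge0.
have m4 : 0 <= C * L' by apply: mulr_ge0.
rewrite /= -/C; lra.
Qed.

Lemma rchain_boff n (P : pred 'I_n) (ps : seq (ppair n)) : forall X Y L,
  rchain ps X Y L -> (forall p, p \in ps -> P p.1 /\ P p.2) -> boff P Y <= boff P X + L.
Proof.
elim: ps => [|p ps IH] X Y L /=.
  by move=> [-> ->] _; rewrite addr0.
case=> ph [al [L' [hp hc hr ->]]] hps.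
have [P1 P2] := hps p (mem_head _ _).
have := IH _ _ _ hr (fun q hq => hps q (mem_behead (hq : q \in behead (p :: ps)))).
rewrite (boff_stepM _ _ _ hp) //.
have := pv_ge0 p X; lra.
Qed.

Lemma rchain_col n (P : pred 'I_n) (c : 'I_n) (ps : seq (ppair n)) : forall X Y L,
  rchain ps X Y L -> (forall p, p \in ps -> P p.1 /\ P p.2) -> ~~ P c ->
  \sum_(r | P r) abs2 (Y r c) = \sum_(r | P r) abs2 (X r c).
Proof.
elim: ps => [|p ps IH] X Y L /=.
  by move=> [-> _].
case=> ph [al [L' [hp hc hr _]]] hps hPc.
have [P1 P2] := hps p (mem_head _ _).
rewrite (IH _ _ _ hr (fun q hq => hps q (mem_behead (hq : q \in behead (p :: ps)))) hPc).
case: p hp P1 P2 {hr hps} => i j /= hp P1 P2.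
rewrite /stepM colv_step //.
rewrite /inb negb_or; apply/andP; split; apply/eqP => e; move: hPc; by rewrite e ?P1 ?P2.
Qed.

Lemma herm_split n (X : 'M[Cx]_n) (m : nat) (jm : 'I_n) : is_hermitian X -> val jm = m ->
  boff (fun r : 'I_n => (r < m.+1)%N) X =
  boff (fun r : 'I_n => (r < m)%N) X + 2 * \sum_(r : 'I_n | (r < m)%N) abs2 (X r jm).
Proof.
move=> hX hjm.
have eqP1 : forall r : 'I_n, ((r < m.+1)%N && (r != jm)) = (r < m)%N.
  move=> r; rewrite ltnS leq_eqVlt; case: (boolP (r == jm)) => h /=.
  - by rewrite (eqP h) hjm ltnn eqxx.
  - have -> : (val r == m) = false by apply/negP => /eqP e; move: h; rewrite -val_eqE /= e hjm eqxx.
    by rewrite andbT.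
rewrite /boff (bigD1 jm) /=; last by rewrite hjm.
rewrite (eq_bigl _ _ eqP1) (eq_bigl _ _ eqP1).
have inner : forall r : 'I_n, (r < m)%N ->
  \sum_(s : 'I_n | (s < m.+1)%N && (s != r)) abs2 (X r s) =
  abs2 (X r jm) + \sum_(s : 'I_n | (s < m)%N && (s != r)) abs2 (X r s).
  move=> r hr; rewrite (bigD1 jm) /=; last first.
    rewrite hjm ltnSn /=; apply/negP => /eqP e; move: hr; by rewrite -e hjm ltnn.
  congr (_ + _); apply: eq_bigl => s.
  rewrite -andbA [(s != r) && _]andbC andbA eqP1 //.
rewrite (eq_bigr _ inner).
have hs : \sum_(i : 'I_n | (i < m)%N) (abs2 (X i jm) + \sum_(s : 'I_n | (s < m)%N && (s != i)) abs2 (X i s)) =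
  \sum_(i : 'I_n | (i < m)%N) abs2 (X i jm) + \sum_(i : 'I_n | (i < m)%N) \sum_(s : 'I_n | (s < m)%N && (s != i)) abs2 (X i s).
  by rewrite big_split.
have hh : \sum_(s : 'I_n | (s < m)%N) abs2 (X jm s) = \sum_(r : 'I_n | (r < m)%N) abs2 (X r jm).
  by apply: eq_bigr => s _; rewrite (hX s jm) abs2_conj.
rewrite hs hh; lra.
Qed.



Definition colblk n (blk : 'I_n -> seq (ppair n)) := forall j : 'I_n,
  perm_eq (blk j) (map (fun i : 'I_n => ((i, j) : ppair n)) (filter (fun i : 'I_n => (i < j)%N) (enum 'I_n))).

Section Col.
Variables (n : nat) (blk : 'I_n -> seq (ppair n)).
Hypothesis hb : colblk blk.

Lemma blk_mem j p : p \in blk j -> p.2 = j /\ (p.1 < j)%N.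
Proof.
rewrite (perm_mem (hb j)) => hp.
case/mapP: hp => i; rewrite mem_filter => /andP[hi _] -> //.
Qed.

Lemma blk_fst j : perm_eq (map fst (blk j)) (filter (fun i : 'I_n => (i < j)%N) (enum 'I_n)).
Proof.
have := perm_map fst (hb j); rewrite -map_comp /= map_id //.
Qed.

Lemma blk_uniq j : uniq (map fst (blk j)).
Proof. by rewrite (perm_uniq (blk_fst j)) filter_uniq // enum_uniq. Qed.

Lemma blk_memfst j r : (r \in map fst (blk j)) = (r < j)%N.
Proof. by rewrite (perm_mem (blk_fst j)) mem_filter mem_enum andbT. Qed.

Lemma blk_size j : (size (blk j) <= n)%N.
Proof.
rewrite (perm_size (hb j)) size_map size_filter.
by apply: (leq_trans (count_size _ _)); rewrite size_enum_ord.
Qed.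

End Col.

Lemma mem_take_enum n m (j : 'I_n) : (j \in take m (enum 'I_n)) = (j < m)%N.
Proof.
rewrite -(mem_map val_inj) map_take val_enum_ord take_iota mem_iota add0n /=.
rewrite leq_min ltn_ord andbT //.
Qed.

Lemma boff_eqP n (P Q : pred 'I_n) X : P =1 Q -> boff P X = boff Q X.
Proof.
move=> e; rewrite /boff (eq_bigl _ _ e); apply: eq_bigr => r _.
by apply: eq_bigl => s; rewrite e.
Qed.

Lemma core_m n (m : nat) : (m <= n)%N -> exists K, 0 <= K /\
  forall blk, colblk blk -> forall X Y L, is_hermitian X ->
  rchain (flatten (map blk (take m (enum 'I_n)))) X Y L ->
  boff (fun r : 'I_n => (r < m)%N) X <= K * L.
Proof.
elim: m => [|m IH] hm.
  exists 0; split => // blk _ X Y L _ _.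
  by rewrite /boff big_pred0 // mul0r.
have [K [K0 hK]] := IH (ltnW hm).
set C := Cst n.
have C0 : 0 <= C by apply: Cst_ge0.
exists (K + 2 * C * (K + 1) + 2 * C); split.
  by apply: addr_ge0; [apply: addr_ge0 => //; apply: mulr_ge0 => //; lra | lra].
move=> blk hb X Y L hX.
pose jm := Ordinal hm.
have hjm : val jm = m by [].
rewrite (take_nth jm); last by rewrite size_enum_ord.
have -> : nth jm (enum (ordinal n)) m = jm by exact: (nth_ord_enum jm jm).
rewrite map_rcons flatten_rcons => /rchain_cat [X1 [L1 [L2 [hr1 hr2 ->]]]].
have hpre : forall p, p \in flatten (map blk (take m (enum 'I_n))) ->
    (fun r : 'I_n => (r < m)%N) p.1 /\ (fun r : 'I_n => (r < m)%N) p.2.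
  move=> p /flattenP [s /mapP [j hj ->] hp].
  have [e1 e2] := blk_mem hb hp; rewrite mem_take_enum in hj.
  by rewrite /= e1; split => //; apply: ltn_trans e2 hj.
have ha := hK blk hb X X1 L1 hX hr1.
have hb1 := rchain_boff (P := fun r : 'I_n => (r < m)%N) hr1 hpre.
have hc := rchain_col (P := fun r : 'I_n => (r < m)%N) (c := jm) hr1 hpre (negbT (ltnn m)).
have hph : \sum_(r | r \in map fst (blk jm)) abs2 (X1 r jm) <=
    Cst (size (blk jm)) * (L2 + boff (fun r => r \in map fst (blk jm)) X1).
  apply: (phase (P := fun r : 'I_n => (r < m)%N)) hr2 _ _ (blk_uniq hb jm).
  - by move=> p hp; have [e1 e2] := blk_mem hb hp; split => //=. 
  - by rewrite /= ltnn.
rewrite (eq_bigl (fun r : 'I_n => (r < m)%N)) in hph; last by move=> r; rewrite blk_memfst.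
rewrite (boff_eqP _ (Q := fun r : 'I_n => (r < m)%N)) in hph; last by move=> r; rewrite blk_memfst.
have hCs : Cst (size (blk jm)) <= C by apply: Cst_mono; apply: blk_size.
have hL1 := rchain_ge0 hr1; have hL2 := rchain_ge0 hr2.
have hB1 := boff_ge0 (fun r : 'I_n => (r < m)%N) X1.
have hph' : \sum_(r : 'I_n | (r < m)%N) abs2 (X1 r jm) <=
    C * (L2 + boff (fun r : 'I_n => (r < m)%N) X1).
  apply: le_trans hph _; apply: ler_wpM2r => //; lra.
rewrite (herm_split hX hjm) -hc.
move: ha hb1 hph'.
set b0 := boff (fun r : 'I_n => (r < m)%N) X.
set b1 := boff (fun r : 'I_n => (r < m)%N) X1.
set S := \sum_(r : 'I_n | (r < m)%N) abs2 (X1 r jm).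
move=> h1 h2 h3.
have m1 : C * b1 <= C * (K * L1 + L1).
  apply: ler_wpM2l => //; lra.
have m2 : 0 <= C * K * L1 by apply: mulr_ge0 => //; apply: mulr_ge0.
have m3 : 0 <= C * L2 by apply: mulr_ge0.
have m4 : 0 <= C * K * L2 by apply: mulr_ge0 => //; apply: mulr_ge0.
have m5 : 0 <= K * L2 by apply: mulr_ge0.
have m6 : 0 <= C * L1 by apply: mulr_ge0.
nra.
Qed.

Lemma core n : exists K, 0 <= K /\ forall (O : seq (ppair n)) X Y L,
  col_cyclic O -> is_hermitian X -> rchain O X Y L -> soff2 X <= K * L.
Proof.
have [K [K0 hK]] := core_m (leqnn n).
exists K; split => // O X Y L [blk [hb ->]] hX hr.
have hb' : colblk blk by [].
have := hK blk hb' X Y L hX.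
rewrite take_oversize ?size_enum_ord // => /(_ hr).
by rewrite (boff_eqP _ (Q := xpredT)) // => r; rewrite /= ltn_ord.
Qed.



Lemma angle_cos (ph : R) : - (pi / 4) <= ph <= pi / 4 -> 1/2 <= cos ph ^+ 2.
Proof.
case/andP => h1 h2.
have e : pi / 2 = pi / 4 + pi / 4 :> R by field.
have h : 0 <= cos (ph *+ 2).
  apply: cos_ge0_pihalf; apply/andP; split; rewrite mulr2n e; lra.
rewrite cos_mulr2n mulr2n in h; lra.
Qed.

Lemma rev_iota0 n : rev (iota 0 n) = map (fun i => n - i.+1)%N (iota 0 n).
Proof.
apply: (@eq_from_nth _ 0%N); first by rewrite size_rev size_map.
move=> i; rewrite size_rev size_iota => hi.
rewrite nth_rev ?size_iota // (nth_map 0%N) ?size_iota // !nth_iota //; lia.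
Qed.

Lemma rev_enum n : rev (enum 'I_n) = map (@rev_ord n) (enum 'I_n).
Proof.
apply: (inj_map val_inj); rewrite map_rev val_enum_ord -map_comp.
rewrite rev_iota0 -val_enum_ord -map_comp; apply: eq_map => i /=; by [].
Qed.

Definition qrev n : 'S_n := perm (@rev_ord_inj n).

Lemma qrevE n (i : 'I_n) : qrev n i = rev_ord i.
Proof. by rewrite permE. Qed.

Lemma row_col n (O : seq (ppair n)) : row_cyclic O -> col_cyclic (map (perm_pair (qrev n)) O).
Proof.
case=> blk [hb ->].
exists (fun j => map (perm_pair (qrev n)) (blk (rev_ord j))); split.
- move=> j; set i0 := rev_ord j.
  apply: (perm_trans (perm_map _ (hb i0))).
  rewrite -map_comp.
  have e : map (perm_pair (qrev n) \o (fun k : 'I_n => ((i0, k) : ppair n)))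
             (filter (fun k : 'I_n => (i0 < k)%N) (enum 'I_n)) =
           map (fun i : 'I_n => ((i, j) : ppair n))
             (map (@rev_ord n) (filter (fun k : 'I_n => (i0 < k)%N) (enum 'I_n))).
    rewrite -map_comp; apply/eq_in_map => k; rewrite mem_filter => /andP[hk _] /=.
    rewrite /perm_pair /= !qrevE /i0 rev_ordK.
    have -> : (j < rev_ord k)%N = false.
      apply/negP; move: hk; rewrite /i0 /= => hk hk2.
      have := ltn_ord j; have := ltn_ord k; lia.
    by [].
  rewrite e; apply: perm_map.
  apply: uniq_perm.
  + by rewrite (map_inj_uniq (@rev_ord_inj n)) filter_uniq // enum_uniq.
  + by rewrite filter_uniq // enum_uniq.
  + have me : forall (P : pred 'I_n) y, (y \in filter P (enum 'I_n)) = P y.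
      by move=> P y; rewrite mem_filter mem_enum andbT.
    move=> x; rewrite -{1}(rev_ordK x) (mem_map (@rev_ord_inj n)) !me.
    rewrite /i0 /=; have := ltn_ord j; have := ltn_ord x.
    move=> h1 h2; apply/idP/idP => h; lia.
- rewrite map_flatten -map_comp rev_enum -map_comp; by [].
Qed.

Lemma csp_bound n : exists g : R, 0 <= g < 1 /\ forall (O : seq (ppair n)) X Y,
  C_sp O -> is_hermitian X -> fchain O X Y -> soff2 Y <= g * soff2 X.
Proof.
have [K [K0 hK]] := core n.
have K1 : 0 < K + 1 by lra.
have K1n : K + 1 != 0 by rewrite gt_eqF.
exists (K / (K + 1)); split.
  apply/andP; split; first by apply: divr_ge0 => //; lra.
  by rewrite ltr_pdivrMr // mul1r; lra.
have colf : forall (O : seq (ppair n)) X Y, col_cyclic O -> is_hermitian X -> fchain O X Y ->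
    soff2 Y <= K / (K + 1) * soff2 X.
  move=> O X Y hO hX /f2r [L [hL hY]].
  have hs := hK O X Y L hO hX hL.
  have hL0 := rchain_ge0 hL.
  have e : K / (K + 1) * soff2 X = soff2 X - soff2 X / (K + 1) by field.
  have h : soff2 X / (K + 1) <= L by rewrite ler_pdivrMr //; nra.
  rewrite e hY; lra.
have colr : forall (O : seq (ppair n)) X Y, col_cyclic (rev O) -> is_hermitian X -> fchain O X Y ->
    soff2 Y <= K / (K + 1) * soff2 X.
  move=> O X Y hO hX hf.
  have hY := fchain_herm hf hX.
  rewrite -(revK O) in hf; have [L [hL hXe]] := frev hf.
  have hs := hK _ Y X L hO hY hL.
  have e : K / (K + 1) * soff2 X = soff2 Y + (K * L - soff2 Y) / (K + 1).
    by rewrite hXe; field.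
  have h : 0 <= (K * L - soff2 Y) / (K + 1) by apply: divr_ge0; lra.
  rewrite e; lra.
move=> O X Y [hO|[hO|[hO|hO]]] hX hf.
- exact: colf hO hX hf.
- exact: colr hO hX hf.
- have := colf _ _ _ (row_col hO) (herm_pm (qrev n) hX) (fchain_pm (qrev n) hf).
  by rewrite !soff2_pm.
- have hc := row_col hO; rewrite map_rev in hc.
  have := colr _ _ _ hc (herm_pm (qrev n) hX) (fchain_pm (qrev n) hf).
  by rewrite !soff2_pm.
Qed.

Lemma count_gt n (r : 'I_n) : count (fun s : 'I_n => (r < s)%N) (enum 'I_n) = (n - r.+1)%N.
Proof.
have -> : count (fun s : 'I_n => (r < s)%N) (enum 'I_n) = count (fun k => (r < k)%N) (map val (enum 'I_n)).
  by rewrite count_map.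
have e : iota 0 n = iota 0 r.+1 ++ iota r.+1 (n - r.+1) by rewrite -iotaD subnKC.
rewrite val_enum_ord e count_cat.
rewrite (@eq_in_count _ _ pred0); last by move=> k; rewrite mem_iota => /andP[_ h] /=; apply/negbTE; rewrite -leqNgt; lia.
rewrite count_pred0 add0n (@eq_in_count _ _ predT); last by move=> k; rewrite mem_iota => /andP[h _].
by rewrite count_predT size_iota.
Qed.

Lemma size_Pn n : size (Pn n) = Npairs n.
Proof.
rewrite /Pn size_flatten /shape -map_comp.
under eq_map => r do rewrite /= size_map size_filter count_gt.
have -> : [seq (n - (nat_of_ord r).+1)%N | r <- enum 'I_n] = map (fun k => n - k.+1)%N (map val (enum 'I_n)).
  by rewrite -map_comp.
rewrite val_enum_ord -rev_iota0 sumn_rev sumnE.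
have := bin2_sum n; rewrite /index_iota subn0 => ->.
by rewrite bin2 /Npairs subn1 divn2.
Qed.

Lemma Pn_mem n (p : ppair n) : p \in Pn n -> (p.1 < p.2)%N.
Proof.
case/flattenP => s /mapP [r _ ->] /mapP [t]; rewrite mem_filter => /andP[h _] -> //.
Qed.

Lemma onth_some T (x0 : T) (s : seq T) i : (i < size s)%N -> onth s i = Some (nth x0 s i).
Proof. by move=> h; rewrite onthE (nth_map x0). Qed.

Lemma jp_fchain n (O : seq (ppair n)) (x0 : ppair n) A Ak phi alpha :
  ordering O -> (0 < size O)%N -> jacobi_process O A Ak phi alpha ->
  (forall k, 1/2 <= cos (phi k) ^+ 2) -> is_hermitian A ->
  forall t, fchain (mkseq (fun k => nth x0 O (k %% size O)) t) A (Ak t).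
Proof.
move=> hO hs [h0 hjp] hc hA; elim => [|t IH]; first by rewrite h0.
rewrite /mkseq -addn1 iotaD map_cat; apply/fchain_cat; exists (Ak t); split => //.
rewrite /= add0n addn1.
have hlt : (t %% size O < size O)%N by rewrite ltn_mod.
set p := nth x0 O (t %% size O).
have hon : onth O (t %% size O) = Some (p.1, p.2).
  by rewrite (onth_some x0) // -surjective_pairing.
have [e z] := hjp t _ _ hon.
have hpO : p \in Pn n by rewrite -(perm_mem hO) mem_nth.
have hlt2 := Pn_mem hpO.
have hAt : is_hermitian (Ak t) := fchain_herm IH hA.
have hAt1 : is_hermitian (Ak t.+1) by rewrite e; apply: herm_step.
have e' : stepM p (phi t) (alpha t) (Ak t) = Ak t.+1 by rewrite e.
exists (phi t), (alpha t); rewrite e'; split => //.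
- by rewrite neq_ltn hlt2.
- by rewrite (hAt1 p.1 p.2) z conj0.
Qed.

Lemma mkseq_ncat n (O : seq (ppair n)) x0 m :
  mkseq (fun k => nth x0 O (k %% size O)) (m * size O) = ncat O m.
Proof.
elim: m => [|m IH]; first by rewrite mul0n.
rewrite mulSn /mkseq iotaD map_cat add0n.
have E : ncat O m.+1 = O ++ ncat O m by [].
rewrite E; congr (_ ++ _).
  transitivity (mkseq (nth x0 O) (size O)); last exact: mkseq_nth.
  apply/eq_in_map => k; rewrite mem_iota add0n /= => h; by rewrite modn_small.
rewrite -IH /mkseq; have := iotaDl (size O) 0 (m * size O); rewrite addn0 => ->; rewrite -map_comp; apply: eq_map => k /=.
by rewrite modnDl.
Qed.



Lemma finish n (O : seq (ppair n)) (g : R) k Y Y' :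
  (forall X Z, is_hermitian X -> fchain O X Z -> soff2 Z <= g * soff2 X) ->
  fchain (ncat O k.+1) Y Y' -> is_hermitian Y -> soff2 Y' <= g * soff2 Y.
Proof.
move=> hb; have E : ncat O k.+1 = O ++ ncat O k by [].
rewrite E => /fchain_cat [Y1 [h1 h2]] hY.
exact: le_trans (fchain_soff h2) (hb _ _ hY h1).
Qed.

Unset Implicit Arguments.

Theorem corollary3p7 (n : nat) (hn : (2 <= n)%N) :
  exists gamma : R, 0 <= gamma < 1 /\
  forall (O O' O'' : seq (ppair n)) (d : nat),
    C_sg O ->
    C_sp O'' ->
    ((p_equiv O O' /\ wequiv_canon d O' O'') \/
     (wequiv_canon d O O' /\ p_equiv O' O'')) ->
    forall (A : 'M[Cx]_n), is_hermitian A ->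
    forall (Ak : nat -> 'M[Cx]_n) (phi alpha : nat -> R),
      jacobi_process O A Ak phi alpha ->
      (forall k, - (pi / 4) <= phi k <= pi / 4) ->
      Soff (Ak ((d + 1) * Npairs n)%N) ^+ 2 <= gamma * Soff A ^+ 2.
Proof.
have [g [hg hbound]] := csp_bound n.
have g0 : 0 <= g by case/andP: hg.
exists g; split => //.
move=> O O' O'' d hsg hsp hrel A hA Ak phi alpha hjp hphi.
have hc : forall k, 1/2 <= cos (phi k) ^+ 2 by move=> k; apply: angle_cos.
case: hsg => hO _.
have hsz : size O = Npairs n by rewrite (perm_size hO) size_Pn.
have hpos : (0 < size O)%N.
  rewrite hsz /Npairs.
  have : (2 %/ 2 <= (n * (n - 1)) %/ 2)%N by apply: leq_div2r; nia.
  by [].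
have n0 : (0 < n)%N by apply: leq_trans hn.
pose x0 : ppair n := (Ordinal n0, Ordinal n0).
have hf := jp_fchain x0 hO hpos hjp hc hA ((d + 1) * Npairs n).
rewrite -hsz mkseq_ncat addn1 in hf.
have hb' : forall X Z, is_hermitian X -> fchain O'' X Z -> soff2 Z <= g * soff2 X.
  by move=> X Z hX; apply: hbound.
rewrite !Soff2E -hsz addn1.
case: hrel => [[[q hq] [c [hw hl _ hcnt]]]|[[c [hw hl _ hcnt]] [q hq]]].
- have hf' := fchain_pm q hf; rewrite pm_ncat -hq in hf'.
  have [|Y [Y' [f hY e1 e2]]] := chain_red hw _ hf' (herm_pm q hA); first by rewrite hcnt.
  rewrite hl in f.
  have := finish hb' f hY.
  rewrite soff2_pm in e1; rewrite soff2_pm in e2.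
  have := ler_wpM2l g0 e1; lra.
- have [|Y [Y' [f hY e1 e2]]] := chain_red hw _ hf hA; first by rewrite hcnt.
  rewrite hl in f.
  have f' := fchain_pm q f; rewrite pm_ncat -hq in f'.
  have := finish hb' f' (herm_pm q hY).
  rewrite !soff2_pm.
  have := ler_wpM2l g0 e1; lra.
Qed.
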